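(* Let $(\Omega,\mathcal F,\Pr)$ be a probability space with filtration $\{\mathcal F_n\}_{n\ge0}$, and let $\{z_n\},\{a_n\},\{x_n\},\{y_n\}$ be non-negative adapted sequences with $\mathbb{E}[z_{n+1}\mid\mathcal F_n]\le(1+a_n)z_n+x_n-y_n$ a.s. Suppose $\sum_na_n<\infty$ a.s.; $|z_{n+1}-z_n|\le b_n(z_n+1)$ a.s. for a non-negative adapted sequence $\{b_n\}$ with $\sum_nb_n^2<\infty$ a.s.; and there is a constant $B\ge0$ such that $z_n>B$ implies $x_n-y_n\le -c_n(z_n-B)$, for a non-negative adapted sequence $\{c_n\}$ with $\sum_nc_n=\infty$ a.s. Assume in addition there is a constant $\eta>0$ with (A1) $\liminf_{n\to\infty} nc_n>\frac{\eta}{2}$; (A2) $\sum_n (n+1)^\eta(a_n^2+b_n)<\infty$ a.s. Then $\lim_{n\to\infty} n^{\eta/2} d(z_n,[0,B])=0$ a.s.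
   Context: For $z\in\mathbb R$ and an interval $Z\subset\mathbb R$, $d(z,Z)\doteq\inf_{\tilde z\in Z}|z-\tilde z|$. *)

(* Defs.v *)
From HB Require Import structures.
From mathcomp Require Import all_boot all_order all_algebra.
From mathcomp Require Import all_classical all_reals all_analysis.
From mathcomp Require Import measurable_realfun lebesgue_integral.
Set Implicit Arguments. Unset Strict Implicit. Unset Printing Implicit Defensive.
Import Order.TTheory GRing.Theory Num.Theory.
Local Open Scope classical_set_scope.
Local Open Scope ring_scope.

Definition dist_set {R : realType} (z : R) (Z : set R) : R :=
  inf [set `|z - t| | t in Z].

Definition is_filtration d (T : measurableType d) (F : nat -> set (set T)) : Prop :=
  [/\ (forall n, sigma_algebra setT (F n)),
      (forall n, F n `<=` measurable) &
      (forall n m, (n <= m)%N -> F n `<=` F m)].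

Definition measurable_wrt (T : Type) d' (U : measurableType d')
  (G : set (set T)) (f : T -> U) : Prop :=
  forall B, measurable B -> G (f @^-1` B).

(* g is a version of the conditional expectation E[X | G] of the
   non-negative random variable X (extended-real valued, since for
   non-negative X it always exists in [0, +oo]) *)
Definition is_cond_exp_nonneg d (T : measurableType d) (R : realType)
  (P : probability T R) (G : set (set T)) (X : T -> R) (g : T -> \bar R) : Prop :=
  [/\ measurable_wrt G g,
      (forall t, (0 <= g t)%E) &
      (forall A, G A -> (\int[P]_(t in A) g t = \int[P]_(t in A) (X t)%:E)%E)].

Definition nonneg_adapted d (T : measurableType d) (R : realType)
  (F : nat -> set (set T)) (u : nat -> T -> R) : Prop :=
  forall n, measurable_wrt (F n) (u n) /\ (forall t, 0 <= u n t).

(* Main.v *)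
Require Import Defs.
From HB Require Import structures.
From mathcomp Require Import all_boot all_order all_algebra.
From mathcomp Require Import all_classical all_reals all_analysis.
From mathcomp Require Import measurable_realfun lebesgue_integral.
From mathcomp Require Import ring lra.
Import Order.TTheory GRing.Theory Num.Theory.
Local Open Scope classical_set_scope.
Local Open Scope ring_scope.

Lemma dist_ge0 (R : realType) (z B : R) : 0 <= B -> 0 <= dist_set z `[0, B].
Proof.
move=> B0; apply: lb_le_inf.
  by exists `|z - 0|, 0 => //=; rewrite in_itv /= lexx B0.
by move=> _ [t _ <-].
Qed.

Lemma dist_le (R : realType) (z B : R) : 0 <= z -> 0 <= B ->
  dist_set z `[0, B] <= (if z <= B then 0 else z - B).
Proof.
move=> z0 B0; have hl : has_lbound [set `|z - t| | t in `[0, B]].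
  by exists 0 => _ [t _ <-].
case: ifPn => [zB|]; last rewrite -ltNge => Bz.
  apply: (le_trans (@ge_inf _ _ hl 0 _)) => //.
  exists z; last by rewrite subrr normr0.
  by rewrite /= in_itv /= z0 zB.
apply: (le_trans (@ge_inf _ _ hl (z - B) _)) => //.
exists B; last by rewrite ger0_norm // subr_ge0 ltW.
by rewrite /= in_itv /= lexx B0.
Qed.

Section PW.
Variable R : realType.

Lemma psum_split (v : nat -> R) n m : (n <= m)%N ->
  \sum_(0 <= k < m) v k = \sum_(0 <= k < n) v k + \sum_(n <= k < m) v k.
Proof. by move=> nm; rewrite (big_cat_nat (leq0n n) nm). Qed.

Lemma psum_mono (v : nat -> R) n m : (forall k, 0 <= v k) -> (n <= m)%N ->
  \sum_(0 <= k < n) v k <= \sum_(0 <= k < m) v k.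
Proof.
move=> v0 nm; rewrite (psum_split v n m nm) lerDl; exact: sumr_ge0.
Qed.

Lemma psum_cauchy (v : nat -> R) S : (forall k, 0 <= v k) ->
  (forall n, \sum_(0 <= k < n) v k <= S) ->
  forall e, 0 < e -> exists N, forall n m, (N <= n)%N -> (n <= m)%N ->
    \sum_(n <= k < m) v k <= e.
Proof.
move=> v0 hS e e0.
set E := [set \sum_(0 <= k < n) v k | n in [set: nat]].
have hE : has_sup E.
  split; first by exists (\sum_(0 <= k < 0) v k), 0%N.
  by exists S => _ [n _ <-].
have [_ [N _ <-] hN] := sup_adherent e0 hE.
exists N => n m Nn nm.
have h1 := psum_split v n m nm.
have h2 : \sum_(0 <= k < m) v k <= sup E by apply: (ub_le_sup hE.2); exists m.
have h3 := psum_mono v N n v0 Nn.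
lra.
Qed.

Lemma zlow (z b : nat -> R) M :
  (forall n, 0 <= b n) -> (forall n, z n + 1 <= M) ->
  (forall n, `|z n.+1 - z n| <= b n * (z n + 1)) ->
  forall n j, z n - M * \sum_(n <= k < n + j) b k <= z (n + j)%N.
Proof.
move=> b0 hM hinc n; elim=> [|j IH].
  by rewrite addn0 big_geq // mulr0 subr0.
rewrite addnS big_nat_recr ?leq_addr //= mulrDr.
have h1 : b (n + j)%N * (z (n + j)%N + 1) <= b (n + j)%N * M.
  by rewrite ler_wpM2l.
have h2 := hinc (n + j)%N.
have h3 : z (n + j)%N - z (n + j).+1 <= `|z (n + j).+1 - z (n + j)%N|.
  by rewrite distrC ler_norm.
lra.
Qed.

Lemma zbound (z b : nat -> R) :
  (forall n, 0 <= z n) -> (forall n, 0 <= b n) ->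
  (forall n, `|z n.+1 - z n| <= b n * (z n + 1)) ->
  forall n, z n + 1 <= (z 0%N + 1) * expR (\sum_(0 <= k < n) b k).
Proof.
move=> z0 b0 hinc; elim=> [|n IH].
  by rewrite big_geq // expR0 mulr1.
rewrite big_nat_recr //= expRD mulrA.
have h1 : z n.+1 - z n <= `|z n.+1 - z n| by rewrite ler_norm.
have h2 := hinc n.
have h3 := expR_ge1Dx (b n).
have h4 : 0 <= z n + 1 by have := z0 n; lra.
have h5 : z n.+1 + 1 <= (z n + 1) * (1 + b n) by nra.
apply: (le_trans h5).
apply: ler_pM => //.
by have := b0 n; lra.
Qed.


Lemma pathwise (z a x y b c : nat -> R) (B eta A S : R) :
  (forall n, 0 <= z n) -> (forall n, 0 <= a n) -> (forall n, 0 <= b n) ->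
  (forall n, 0 <= c n) ->
  (forall n, z n - b n * (z n + 1) <= (1 + a n) * z n + x n - y n) ->
  (forall n, `|z n.+1 - z n| <= b n * (z n + 1)) ->
  (forall n, \sum_(0 <= k < n) a k <= A) ->
  (forall n, \sum_(0 <= k < n) (k.+1%:R `^ eta * (a k ^+ 2 + b k)) <= S) ->
  (forall n, B < z n -> x n - y n <= - (c n * (z n - B))) ->
  (forall C, exists n, C < \sum_(0 <= k < n) c k) ->
  0 < eta -> 0 <= B ->
  (fun n => n%:R `^ (eta / 2) * dist_set (z n) `[0, B]) @ \oo --> 0.
Proof.
move=> z0 a0 b0 c0 hxy hinc hA hS hc hC eta0 B0.
set v := fun k : nat => k.+1%:R `^ eta * (a k ^+ 2 + b k).
have v0 : forall k, 0 <= v k.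
  by move=> k; rewrite /v mulr_ge0 ?powR_ge0 ?addr_ge0 ?sqr_ge0.
have pow1 : forall k : nat, 1 <= k.+1%:R `^ eta.
  move=> k; have := @ler_powR _ k.+1%:R _ 0 eta; rewrite powRr0; apply.
    by rewrite ler1n.
  exact: ltW.
have bv : forall k, b k <= v k.
  move=> k; rewrite /v -[b k]mul1r; apply: ler_pM => //.
  have := sqr_ge0 (a k); lra.
have hb : forall n, \sum_(0 <= k < n) b k <= S.
  by move=> n; apply: le_trans (hS n); apply: ler_sum => k _; exact: bv.
set M := (z 0%N + 1) * expR S.
have hM : forall n, z n + 1 <= M.
  move=> n; apply: (le_trans (zbound z b z0 b0 hinc n)); apply: ler_pM => //.
  - by have := z0 0%N; lra.
  - by rewrite ler_expR.
have M0 : 0 < M by have := hM 0%N; have := z0 0%N; lra.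
have hlow := zlow z b M b0 hM hinc.
apply/cvgrPdist_le => e e0.
have e20 : 0 < e / (2 * M) by rewrite divr_gt0 // mulr_gt0.
have [N hN] := psum_cauchy v S v0 hS _ e20.
near=> n.
have Nn : (N.+1 <= n)%N by near: n; exists N.+1.
have n1 : 1 <= n%:R :> R by rewrite ler1n; apply: leq_trans Nn.
set p := n%:R `^ (eta / 2).
have p0 : 0 < p by rewrite /p powR_gt0 //; lra.
have hd0 := @dist_ge0 R (z n) B B0.
have hdle := @dist_le R (z n) B (z0 n) B0.
rewrite sub0r normrN ger0_norm ?mulr_ge0 ?powR_ge0 //.
move: hdle; case: ifPn => [_ hd|]; first by apply: le_trans (ler_wpM2l (ltW p0) hd) _; rewrite mulr0 ltW.
rewrite -ltNge => Bz hd.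
apply: le_trans (ler_wpM2l (ltW p0) hd) _.
rewrite leNgt; apply/negP => hlt.
set de := e / (2 * p).
have de0 : 0 < de by rewrite divr_gt0 // mulr_gt0.
have hpde : p * (2 * de) = e by rewrite /de; field; rewrite gt_eqF.
have hzn : 2 * de < z n - B.
  by rewrite -(ltr_pM2l p0) hpde.
have far : forall j, de < z (n + j)%N - B.
  move=> j.
  have hsum : M * \sum_(n <= k < n + j) b k <= de.
    have h1 : p * \sum_(n <= k < n + j) b k <= \sum_(n <= k < n + j) v k.
      rewrite mulr_sumr; apply: ler_sum_nat => k /andP[nk _].
      apply: le_trans (_ : k.+1%:R `^ eta * b k <= _); last first.
        by rewrite /v ler_wpM2l ?powR_ge0 // lerDr sqr_ge0.
      apply: ler_wpM2r => //.
      apply: (@le_trans _ _ (k.+1%:R `^ (eta / 2))).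
        apply: ge0_ler_powR; rewrite ?nnegrE ?ler_nat //; try lra.
        by apply: (leq_trans nk).
      by apply: ler_powR; [rewrite ler1n | lra].
    have h2 := hN n (n + j)%N (ltnW Nn) (leq_addr _ _).
    have h3 : p * \sum_(n <= k < n + j) b k <= e / (2 * M) by apply: le_trans h1 h2.
    have h4 : M * (p * \sum_(n <= k < n + j) b k) <= M * (e / (2 * M)).
      by rewrite ler_wpM2l // ltW.
    have h5 : M * (e / (2 * M)) = p * (2 * de) / 2.
      by rewrite hpde; field; rewrite gt_eqF.
    rewrite -(ler_pM2l p0); rewrite mulrCA; apply: (le_trans h4).
    by rewrite h5 (_ : p * (2 * de) / 2 = p * de) //; field.
  have := hlow n j; lra.
have cb : forall k, (n <= k)%N -> c k * de <= M * (a k + b k).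
  move=> k nk; have fm := far (k - n)%N; rewrite subnKC // in fm.
  have Bk : B < z k by lra.
  have h1 := hc k Bk.
  have h2 := hxy k.
  have h3 : c k * de <= c k * (z k - B) by rewrite ler_wpM2l // ltW.
  have h4 : a k * z k <= a k * M by rewrite ler_wpM2l //; have := hM k; lra.
  have h5 : b k * (z k + 1) <= b k * M by rewrite ler_wpM2l //.
  lra.
have [m hm] := hC (\sum_(0 <= k < n) c k + M * (A + S) / de).
have e1 := psum_mono c m (n + m)%N c0 (leq_addl _ _).
have e2 := psum_split c n (n + m)%N (leq_addr _ _).
have e3 : \sum_(n <= k < n + m) (c k * de) <= \sum_(n <= k < n + m) (M * (a k + b k)).
  by apply: ler_sum_nat => k /andP[nk _]; exact: cb.
have e3' : \sum_(n <= k < n + m) (M * (a k + b k)) <= M * (A + S).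
  rewrite -mulr_sumr ler_wpM2l ?(ltW M0) // big_split /=.
  have f1 := psum_split a n (n + m)%N (leq_addr _ _).
  have f2 := psum_split b n (n + m)%N (leq_addr _ _).
  have f3 : 0 <= \sum_(0 <= k < n) a k by exact: sumr_ge0.
  have f4 : 0 <= \sum_(0 <= k < n) b k by exact: sumr_ge0.
  have := hA (n + m)%N; have := hb (n + m)%N; lra.
have e5 : \sum_(n <= k < n + m) (c k * de) = (\sum_(n <= k < n + m) c k) * de.
  by rewrite mulr_suml.
have e4 : \sum_(n <= k < n + m) c k <= M * (A + S) / de.
  rewrite ler_pdivlMr //; rewrite -e5; exact: le_trans e3 e3'.
lra.
Unshelve. all: by end_near.
Qed.

End PW.

Lemma wrt_mfun d (T : measurableType d) d' (U : measurableType d')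
  (G : set (set T)) (f : T -> U) :
  G `<=` measurable -> measurable_wrt G f -> measurable_fun setT f.
Proof. by move=> GM mf _ Y mY; rewrite setTI; apply: GM; exact: mf. Qed.

Lemma wrt_setI (T : pointedType) (G : set (set T)) A B :
  sigma_algebra setT G -> G A -> G B -> G (A `&` B).
Proof.
move=> sG GA GB.
have := @measurableI _ (g_sigma_algebraType G) A B.
by rewrite /measurable /= (sigma_algebra_id sG); apply.
Qed.


Arguments wrt_mfun {d T d' U G f}.
Arguments wrt_setI {T G A B}.

Lemma fin_mul_le0 (R : realType) (a b : R) (x : \bar R) :
  x \is a fin_num -> (0 <= x)%E -> (b < a)%R -> (a%:E * x <= b%:E * x)%E -> x = 0%E.
Proof.
case: x => // r _; rewrite lee_fin -!EFinM lee_fin => r0 ba h.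
apply/eqP; rewrite eqe; apply/eqP; nra.
Qed.

Section CondLB.
Local Open Scope ereal_scope.

Lemma cond_lb d (T : measurableType d) (R : realType) (P : probability T R)
  (G : set (set T)) (X h : T -> R) (g : T -> \bar R) :
  sigma_algebra setT G -> G `<=` measurable ->
  measurable_wrt G h -> is_cond_exp_nonneg P G X g ->
  measurable_fun setT X -> (forall t, (0 <= X t)%R) ->
  {ae P, forall t, (h t <= X t)%R} -> {ae P, forall t, (h t)%:E <= g t}.
Proof.
move=> sG GM mh [mg g0 gint] mX X0 hX.
pose A (q : rat) (k : nat) := [set t | g t < (ratr q)%:E] `&`
  [set t | (ratr q + k.+1%:R^-1 < h t)%R].
have GA : forall q k, G (A q k).
  move=> q k; apply: wrt_setI => //.
    have -> : [set t | g t < (ratr q)%:E] = g @^-1` [set` `]-oo, (ratr q)%:E[].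
      by apply/seteqP; split => t /=; rewrite in_itv /=.
    by apply: mg; exact: emeasurable_itv.
  have -> : [set t | (ratr q + k.+1%:R^-1 < h t)%R] =
      h @^-1` [set` `](ratr q + k.+1%:R^-1)%R, +oo[].
    by apply/seteqP; split => t /=; rewrite in_itv /= andbT.
  by apply: mh; exact: measurable_itv.
have PA : forall q k, P (A q k) = 0.
  move=> q k; have mA := GM _ (GA q k).
  have e1 := gint _ (GA q k).
  have mgA : measurable_fun (A q k) g.
    exact: measurable_funS measurableT (subsetT _) (wrt_mfun GM mg).
  have i1 : \int[P]_(t in A q k) g t <= \int[P]_(t in A q k) (cst (ratr q)%:E) t.
    apply: ge0_le_integral => //.
    by move=> t [/ltW].
  have i2 : \int[P]_(t in A q k) (cst (ratr q + k.+1%:R^-1)%R%:E) t <=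
            \int[P]_(t in A q k) (X t)%:E.
    apply: ae_ge0_le_integral => //.
    - move=> t [gt _] /=; rewrite lee_fin.
      have := le_lt_trans (g0 t) gt; rewrite lte_fin => q0.
      by rewrite addr_ge0 // ltW.
    - by move=> t _; rewrite lee_fin.
    - exact/measurable_EFinP/(measurable_funS measurableT (subsetT _) mX).
    - apply: filterS hX => t hXt [_ /= ht]; rewrite lee_fin.
      by apply: ltW; apply: lt_le_trans ht hXt.
  rewrite !integral_cst // in i1 i2.
  have fA : P (A q k) \is a fin_num by apply: fin_num_measure.
  rewrite e1 in i1.
  have := le_trans i2 i1.
  apply: (@fin_mul_le0 _ (ratr q + k.+1%:R^-1)%R (ratr q)) => //.
  - by rewrite ltrDl invr_gt0.
pose qof i : rat := odflt 0%R (unpickle i).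
have N0 : P.-negligible (\bigcup_k \bigcup_i A (qof i) k).
  apply: negligible_bigcup => k; apply: negligible_bigcup => i.
  by exists (A (qof i) k); split; [exact: GM | exact: PA | by []].
apply: negligibleS N0 => t /= /negP; rewrite -ltNge => hgt.
have gfin : g t \is a fin_num.
  by rewrite ge0_fin_numE // (lt_le_trans hgt) // leey.
rewrite -(fineK gfin) lte_fin in hgt.
set r := fine (g t) in hgt.
set de := ((h t - r) / 2)%R.
have de0 : (0 < de)%R by rewrite /de divr_gt0 // subr_gt0.
set k := Num.truncn (de^-1).
have hk : (k.+1%:R^-1 < de)%R.
  rewrite invf_plt ?posrE //.
  by apply: real_truncnS_gt; rewrite realE ltW // invr_gt0.
have rd : (r < r + de)%R by rewrite ltrDl.
have [q] := rat_in_itvoo rd; rewrite in_itv /= => /andP[q1 q2].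
exists k => //; exists (pickle q) => //; rewrite /qof pickleK /=; split => /=.
  by rewrite -(fineK gfin) lte_fin.
have eh : h t = (r + 2 * de)%R by rewrite /de; field.
rewrite eh; move: hk q2; move: (k.+1%:R^-1)%R (ratr q) => u v; clearbody de r; lra.
Qed.

End CondLB.

Section Conv.
Variable R : realType.
Local Open Scope ereal_scope.

Lemma ser_bound (u : nat -> R) : (forall k, (0 <= u k)%R) ->
  \sum_(0 <= k <oo) (u k)%:E < +oo ->
  exists A, forall n, (\sum_(0 <= k < n) u k <= A)%R.
Proof.
move=> u0 hlt; have s0 : 0 <= \sum_(0 <= k <oo) (u k)%:E.
  by apply: nneseries_ge0 => k _; rewrite lee_fin.
have hf : \sum_(0 <= k <oo) (u k)%:E \is a fin_num by rewrite ge0_fin_numE.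
exists (fine (\sum_(0 <= k <oo) (u k)%:E)) => n.
rewrite -lee_fin fineK // -sumEFin.
by apply: nneseries_lim_ge => k _ _; rewrite lee_fin.
Qed.

Lemma ser_unb (u : nat -> R) : (forall k, (0 <= u k)%R) ->
  \sum_(0 <= k <oo) (u k)%:E = +oo ->
  forall C, exists n, (C < \sum_(0 <= k < n) u k)%R.
Proof.
move=> u0 hinf C; apply: contrapT => hn.
have hle : forall n, (\sum_(0 <= k < n) u k <= C)%R.
  by move=> n; rewrite leNgt; apply/negP => h; apply: hn; exists n.
have nd : {homo (fun n => \sum_(0 <= k < n) (u k)%:E) : n m / (n <= m)%N >-> n <= m}.
  by apply: ereal_nondecreasing_series => k _ _; rewrite lee_fin.
have := cvg_lim (@ereal_hausdorff R) (ereal_nondecreasing_cvgn nd).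
move: hinf; rewrite /series /= => -> hsup.
have : ereal_sup (range (fun n => \sum_(0 <= k < n) (u k)%:E)) <= C%:E.
  by apply: ge_ereal_sup => _ [n _ <-]; rewrite sumEFin lee_fin.
by rewrite -hsup leye_eq.
Qed.
End Conv.

Lemma wrt_iff (T : pointedType) (R : realType) (G : set (set T)) (f : T -> R) :
  sigma_algebra setT G ->
  measurable_wrt G f <-> measurable_fun (setT : set (g_sigma_algebraType G)) f.
Proof.
move=> sG; split.
  move=> mf _ Y mY; rewrite /measurable /= (sigma_algebra_id sG) setTI.
  exact: mf.
move=> mf Y mY; have := mf measurableT Y mY.
by rewrite /measurable /= (sigma_algebra_id sG) setTI.
Qed.

Arguments wrt_iff {T R G f}.
Arguments cond_lb {d T R P G X h g}.

Lemma step_ae d (T : measurableType d) (R : realType)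
  (P : probability T R) (F : nat -> set (set T))
  (z a x y b : nat -> T -> R) n :
  is_filtration F ->
  nonneg_adapted F z -> nonneg_adapted F b ->
  (exists g : T -> \bar R,
     is_cond_exp_nonneg P (F n) (z n.+1) g /\
     {ae P, forall t, (g t <= ((1 + a n t) * z n t + x n t - y n t)%:E)%E}) ->
  {ae P, forall t, forall n, `|z n.+1 t - z n t| <= b n t * (z n t + 1)} ->
  {ae P, forall t, z n t - b n t * (z n t + 1) <= (1 + a n t) * z n t + x n t - y n t}.
Proof.
move=> [sF FM Fmono] hz hb [g [hce hg]] hinc.
have mh : measurable_wrt (F n) (fun t => z n t - b n t * (z n t + 1)).
  apply/(wrt_iff (sF n)).
  have mz := (wrt_iff (sF n)).1 (hz n).1.
  have mb := (wrt_iff (sF n)).1 (hb n).1.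
  apply: measurable_funB => //; apply: measurable_funM => //.
  by apply: measurable_funD => //; exact: measurable_cst.
have mX : measurable_fun setT (z n.+1) := wrt_mfun (FM n.+1) (hz n.+1).1.
have hX : {ae P, forall t, z n t - b n t * (z n t + 1) <= z n.+1 t}.
  apply: filterS hinc => t /(_ n) h.
  have : z n t - z n.+1 t <= `|z n.+1 t - z n t| by rewrite distrC ler_norm.
  lra.
have := cond_lb (sF n) (FM n) mh hce mX (fun t => (hz n.+1).2 t) hX.
apply: filterS2 hg => t h1 h2.
by rewrite -lee_fin (le_trans h2 h1).
Qed.

Theorem theorem5 (d : measure_display) (T : measurableType d) (R : realType)
  (P : probability T R) (F : nat -> set (set T))
  (z a x y b c : nat -> T -> R) (B eta : R) :
  is_filtration F ->
  nonneg_adapted F z -> nonneg_adapted F a -> nonneg_adapted F x ->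
  nonneg_adapted F y -> nonneg_adapted F b -> nonneg_adapted F c ->
  (forall n, exists g : T -> \bar R,
     is_cond_exp_nonneg P (F n) (z n.+1) g /\
     {ae P, forall t, (g t <= ((1 + a n t) * z n t + x n t - y n t)%:E)%E}) ->
  {ae P, forall t, (\sum_(0 <= k <oo) (a k t)%:E < +oo)%E} ->
  {ae P, forall t, forall n, `|z n.+1 t - z n t| <= b n t * (z n t + 1)} ->
  {ae P, forall t, (\sum_(0 <= k <oo) ((b k t) ^+ 2)%:E < +oo)%E} ->
  0 <= B ->
  {ae P, forall t, forall n, z n t > B -> x n t - y n t <= - (c n t * (z n t - B))} ->
  {ae P, forall t, (\sum_(0 <= k <oo) (c k t)%:E = +oo)%E} ->
  0 < eta ->
  {ae P, forall t, ((eta / 2)%:E < limn_einf (fun n => (n%:R * c n t)%:E))%E} ->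
  {ae P, forall t, (\sum_(0 <= k <oo)
      ((k.+1%:R `^ eta) * ((a k t) ^+ 2 + b k t))%:E < +oo)%E} ->
  {ae P, forall t,
      (fun n => n%:R `^ (eta / 2) * dist_set (z n t) `[0, B]) @ \oo --> 0}.
Proof.
move=> hF hz ha hx hy hb hc hce hA hinc _ B0 hcB hC eta0 _ hS.
have hstep : {ae P, forall t, forall n,
    z n t - b n t * (z n t + 1) <= (1 + a n t) * z n t + x n t - y n t}.
  by apply: ae_foralln => n; exact: step_ae hF hz hb (hce n) hinc.
apply: filterS (filterI hstep (filterI hinc (filterI hA (filterI hS (filterI hcB hC)))))
  => t [h1 [h2 [h3 [h4 [h5 h6]]]]].
have [A' hA'] := @ser_bound R _ (fun k => (ha k).2 t) h3.
have v0 : forall k, 0 <= k.+1%:R `^ eta * (a k t ^+ 2 + b k t).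
  move=> k; rewrite mulr_ge0 ?powR_ge0 // addr_ge0 ?sqr_ge0 //; exact: (hb k).2.
have [S' hS'] := @ser_bound R (fun k => k.+1%:R `^ eta * (a k t ^+ 2 + b k t)) v0 h4.
have hC' := @ser_unb R _ (fun k => (hc k).2 t) h6.
apply: (@pathwise R (fun n => z n t) (fun n => a n t) (fun n => x n t)
  (fun n => y n t) (fun n => b n t) (fun n => c n t) B eta A' S') => //.
- by move=> n; exact: (hz n).2.
- by move=> n; exact: (ha n).2.
- by move=> n; exact: (hb n).2.
- by move=> n; exact: (hc n).2.
Qed.
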